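(* Let $d\ge2$ and $1\le N\le M$ be integers with $d\mid(M-N)$. For $\boldsymbol\theta=(\theta_1,\dots,\theta_{d-1})\in[0,2\pi)^{d-1}$ let $U_{\boldsymbol\theta}=|0\rangle\langle0|+\sum_{k=1}^{d-1}e^{-i\theta_k}|k\rangle\langle k|$ and $|e_{\boldsymbol\theta}\rangle=d^{-1/2}\big(|0\rangle+\sum_{k=1}^{d-1}e^{-i\theta_k}|k\rangle\big)$. Then there exist a finite-dimensional Hilbert space $\mathcal H_A$, a state $\sigma$ on $(\mathbb C^d)^{\otimes N}\otimes\mathcal H_A\otimes(\mathbb C^d)^{\otimes M}$ and a quantum channel $\mathcal C$ from $(\mathbb C^d)^{\otimes N}\otimes\mathcal H_A\otimes(\mathbb C^d)^{\otimes M}$ to $(\mathbb C^d)^{\otimes M}$ such that for all $\boldsymbol\theta$, $$\langle e_{\boldsymbol\theta}|^{\otimes M}\,\mathcal C\big((U_{\boldsymbol\theta}^{\otimes N}\otimes I)\sigma(U_{\boldsymbol\theta}^{\otimes N}\otimes I)^\dagger\big)\,|e_{\boldsymbol\theta}\rangle^{\otimes M}\ge1-2(M+1)^{\frac{d(d-1)}{2}}\exp\!\Big[-\frac{2N^2}{d^2M}\Big].$$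
   Context: $\{|0\rangle,\dots,|d-1\rangle\}$ is the computational basis of $\mathbb C^d$; $U_{\boldsymbol\theta}^{\otimes N}$ acts on the factor $(\mathbb C^d)^{\otimes N}$ and $I$ on the remaining factors. *)

(* Defs.v *)
From Stdlib Require Import Reals.
From mathcomp Require Import all_boot.
Set Implicit Arguments.
Local Open Scope R_scope. Unset Strict Implicit. Unset Printing Implicit Defensive.

Record C := mkC { re : R; im : R }.
Definition C0 : C := mkC 0 0.
Definition C1 : C := mkC 1 0.
Definition RtoC (r : R) : C := mkC r 0.
Definition Cadd (z w : C) : C := mkC (re z + re w) (im z + im w).
Definition Cmul (z w : C) : C :=
  mkC (re z * re w - im z * im w) (re z * im w + im z * re w).
Definition Cconj (z : C) : C := mkC (re z) (- im z).
Definition Cexpi (t : R) : C := mkC (cos t) (sin t).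

Definition csum (T : finType) (f : T -> C) : C :=
  foldr (fun x acc => Cadd (f x) acc) C0 (enum T).
Definition cprod (T : finType) (f : T -> C) : C :=
  foldr (fun x acc => Cmul (f x) acc) C1 (enum T).

Definition Mat (T : finType) := T -> T -> C.
Definition Vec (T : finType) := T -> C.

Definition Mmul (T : finType) (A B : Mat T) : Mat T :=
  fun i j => csum (fun k => Cmul (A i k) (B k j)).
Definition Madj (T : finType) (A : Mat T) : Mat T := fun i j => Cconj (A j i).
Definition Mid (T : finType) : Mat T := fun i j => if i == j then C1 else C0.
Definition Mtrace (T : finType) (A : Mat T) : C := csum (fun i => A i i).
(* tensor product: C^S (x) C^T = C^(S * T) *)
Definition kron (S T : finType) (A : Mat S) (B : Mat T) : Mat (S * T)%type :=
  fun x y => Cmul (A x.1 y.1) (B x.2 y.2).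
(* N-fold tensor power: (C^T)^{(x) N} = C^({ffun 'I_N -> T}) *)
Definition Mtpow (T : finType) (N : nat) (A : Mat T) : Mat {ffun 'I_N -> T} :=
  fun x y => cprod (fun k : 'I_N => A (x k) (y k)).
Definition Vtpow (T : finType) (N : nat) (v : Vec T) : Vec {ffun 'I_N -> T} :=
  fun x => cprod (fun k : 'I_N => v (x k)).
Definition braket (T : finType) (v : Vec T) (A : Mat T) : C :=
  csum (fun i => csum (fun j => Cmul (Cconj (v i)) (Cmul (A i j) (v j)))).

Definition PSD (T : finType) (A : Mat T) : Prop :=
  forall v : Vec T, im (braket v A) = 0 /\ (0 <= re (braket v A)).
Definition is_state (T : finType) (rho : Mat T) : Prop :=
  PSD rho /\ Mtrace rho = C1.

Definition is_linear_map (S T : finType) (Phi : Mat S -> Mat T) : Prop :=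
  forall (a : C) (X Y : Mat S) (i j : T),
    Phi (fun k l => Cadd (Cmul a (X k l)) (Y k l)) i j
    = Cadd (Cmul a (Phi X i j)) (Phi Y i j).
(* id_k (x) Phi acting on C^('I_k * S) *)
Definition ext_id (k : nat) (S T : finType) (Phi : Mat S -> Mat T)
  (X : Mat ('I_k * S)%type) : Mat ('I_k * T)%type :=
  fun x y => Phi (fun s s' => X (x.1, s) (y.1, s')) x.2 y.2.
Definition is_channel (S T : finType) (Phi : Mat S -> Mat T) : Prop :=
  [/\ is_linear_map Phi,
      (forall X : Mat S, Mtrace (Phi X) = Mtrace X) &
      (forall (k : nat) (X : Mat ('I_k * S)%type), PSD X -> PSD (ext_id Phi X))].

(* theta : nat -> R; only theta 1, ..., theta (d-1) are used.
   phase k = 1 for k = 0, e^{-i theta_k} for 1 <= k <= d-1. *)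
Definition phase (theta : nat -> R) (k : nat) : C :=
  if k == 0%N then C1 else Cexpi (- theta k).
Definition Utheta (d : nat) (theta : nat -> R) : Mat 'I_d :=
  fun i j => if i == j then phase theta i else C0.
Definition etheta (d : nat) (theta : nat -> R) : Vec 'I_d :=
  fun k => Cmul (RtoC (/ sqrt (INR d))) (phase theta k).

Arguments Mid : clear implicits.
Arguments Utheta : clear implicits.
Arguments etheta : clear implicits.
Arguments Mtpow {T} N A _ _.
Arguments Vtpow {T} N v _.

(* Main.v *)
Require Import Defs.
From Stdlib Require Import Reals Lra.
From Coquelicot Require Import Coquelicot.
Open Scope R_scope.

Lemma mvt_nonneg (f df : R -> R) (u : R) :
  0 <= u ->
  (forall x, 0 <= x <= u -> is_derive f x (df x)) ->
  (forall x, 0 <= x <= u -> 0 <= df x) -> f 0 <= f u.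
Proof.
intros Hu Hd Hpos.
destruct (Rle_lt_or_eq_dec 0 u Hu) as [Hlt|Heq]; [|subst; lra].
destruct (MVT_gen f 0 u df) as [c [Hc Heq]].
- intros x Hx. rewrite Rmin_left in Hx by lra. rewrite Rmax_right in Hx by lra.
  apply Hd; lra.
- intros x Hx. rewrite Rmin_left in Hx by lra. rewrite Rmax_right in Hx by lra.
  apply continuity_pt_filterlim. apply (@ex_derive_continuous R_AbsRing R_NormedModule f x).
  eexists. apply Hd; lra.
- rewrite Rmin_left in Hc by lra. rewrite Rmax_right in Hc by lra.
  assert (0 <= df c) by (apply Hpos; lra).
  assert (0 <= df c * (u - 0)) by (apply Rmult_le_pos; lra). lra.
Qed.

Lemma q_pos (p x : R) : 0 <= p <= 1 -> 0 < 1 - p + p * exp (- x).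
Proof.
intros Hp. pose proof (exp_pos (- x)).
destruct (Rle_lt_or_eq_dec p 1 (proj2 Hp)).
- assert (0 <= p * exp (-x)) by (apply Rmult_le_pos; lra). lra.
- subst. lra.
Qed.

Lemma hoeff (p u : R) : 0 <= p <= 1 -> 0 <= u ->
  1 - p + p * exp (- u) <= exp (u ^ 2 / 8 - u * p).
Proof.
intros Hp Hu.
set (q := fun x => 1 - p + p * exp (- x)).
assert (Hq : forall x, 0 < q x) by (intros; apply q_pos; auto).
set (phi := fun x => x ^ 2 / 8 - x * p - ln (q x)).
set (dphi := fun x => x / 4 - p + p * exp (- x) / q x).
set (ddphi := fun x => (q x - 2 * p * exp (- x)) ^ 2 / (4 * (q x) ^ 2)).
assert (Hdd : forall x, 0 <= x -> dphi 0 <= dphi x).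
{ intros x Hx. apply (mvt_nonneg dphi ddphi x Hx).
  - intros y Hy. unfold dphi, ddphi, q. auto_derive.
    + pose proof (Hq y). unfold q in *. lra.
    + pose proof (Hq y). unfold q in *. field. lra.
  - intros y Hy. unfold ddphi. pose proof (Hq y).
    apply Rmult_le_pos. apply pow2_ge_0. left; apply Rinv_0_lt_compat.
    apply Rmult_lt_0_compat; [lra| apply pow_lt; lra]. }
assert (Hd0 : dphi 0 = 0).
{ unfold dphi, q. rewrite Ropp_0, exp_0. replace (1 - p + p * 1) with 1 by ring. field. }
assert (H2 : phi 0 <= phi u).
{ apply (mvt_nonneg phi dphi u Hu).
  - intros x Hx. unfold dphi, phi, q. auto_derive.
    + pose proof (Hq x). unfold q in *. lra.
    + pose proof (Hq x). unfold q in *. field. lra.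
  - intros x Hx. rewrite <- Hd0. apply Hdd. lra. }
assert (Hp0 : phi 0 = 0).
{ unfold phi, q. rewrite Ropp_0, exp_0.
  replace (1 - p + p * 1) with 1 by ring. rewrite ln_1. field. }
assert (Hl : ln (q u) <= u ^ 2 / 8 - u * p) by (rewrite Hp0 in H2; unfold phi in H2; lra).
change (q u <= exp (u ^ 2 / 8 - u * p)).
rewrite <- (exp_ln (q u) (Hq u)).
destruct (Rle_lt_or_eq_dec _ _ Hl) as [Hlt|Heq].
- left. apply exp_increasing. exact Hlt.
- rewrite Heq. lra.
Qed.

Lemma exp_pow_n (a : R) (n : nat) : exp a ^ n = exp (INR n * a).
Proof.
induction n as [|n IH].
- simpl. rewrite Rmult_0_l, exp_0. reflexivity.
- change (exp a ^ S n) with (exp a * exp a ^ n).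
  rewrite IH, <- exp_plus, S_INR. f_equal. ring.
Qed.

Lemma tail_real (d M N c : R) (m : nat) :
  1 <= d -> 0 < M -> M = INR m -> c * d + N = M -> 0 <= N ->
  exp (4 * N / (d * M) * c) * (exp (- (4 * N / (d * M))) + d - 1) ^ m
  <= d ^ m * exp (- (2 * N ^ 2) / (d ^ 2 * M)).
Proof.
intros Hd HM Hm Hc HN.
set (l := 4 * N / (d * M)).
assert (Hl : 0 <= l).
{ unfold l. apply Rmult_le_pos; [lra|]. left; apply Rinv_0_lt_compat.
  apply Rmult_lt_0_compat; lra. }
assert (Hp : 0 <= / d <= 1).
{ split. left; apply Rinv_0_lt_compat; lra.
  rewrite <- Rinv_1. apply Rinv_le_contravar; lra. }
pose proof (hoeff (/ d) l Hp Hl) as Hh.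
assert (E1 : exp (- l) + d - 1 = d * (1 - / d + / d * exp (- l))) by (field; lra).
assert (H2 : (exp (- l) + d - 1) ^ m <= (d * exp (l ^ 2 / 8 - l * / d)) ^ m).
{ apply pow_incr. split.
  - pose proof (exp_pos (- l)). lra.
  - rewrite E1. apply Rmult_le_compat_l; lra. }
rewrite Rpow_mult_distr, exp_pow_n in H2.
apply Rle_trans with (exp (l * c) * (d ^ m * exp (INR m * (l ^ 2 / 8 - l * / d)))).
{ apply Rmult_le_compat_l; [left; apply exp_pos| exact H2]. }
rewrite <- Rmult_assoc, (Rmult_comm (exp (l * c))), Rmult_assoc, <- exp_plus.
apply Rmult_le_compat_l; [apply pow_le; lra|].
right. f_equal. rewrite <- Hm. unfold l.
assert (Hc' : c = (M - N) / d) by (field_simplify_eq; lra).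
rewrite Hc'. field. lra.
Qed.

Lemma exp_ge1_aux (l c n : R) : 0 <= l -> n + 1 <= c -> 1 <= exp (l * c + - l * n).
Proof.
intros Hl Hc. apply Rle_trans with (1 + (l * c + - l * n)); [nra|apply exp_ineq1_le].
Qed.

Lemma final_real (d M n K : nat) (B : R) : 1 <= INR d -> 0 < INR n -> 0 <= B ->
  INR d <= 2 * INR (M + 1) ^ K ->
  INR d ^ M * (1 - INR d * B) <= INR n ->
  (/ sqrt (INR d)) ^ M * / sqrt (INR n) * ((/ sqrt (INR d)) ^ M * / sqrt (INR n)) * INR (n * n)
  >= 1 - 2 * INR (M + 1) ^ K * B.
Proof.
intros Hd Hn HB HK H.
assert (Hdm : 0 < INR d ^ M) by (apply pow_lt; lra).
assert (E : (/ sqrt (INR d)) ^ M * / sqrt (INR n) * ((/ sqrt (INR d)) ^ M * / sqrt (INR n)) * INR (n * n)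
            = INR n / INR d ^ M).
{ rewrite mult_INR.
  replace ((/ sqrt (INR d)) ^ M * / sqrt (INR n) * ((/ sqrt (INR d)) ^ M * / sqrt (INR n)))
    with ((/ sqrt (INR d) * / sqrt (INR d)) ^ M * (/ sqrt (INR n) * / sqrt (INR n)))
    by (rewrite Rpow_mult_distr; ring).
  rewrite <- !Rinv_mult, !sqrt_sqrt by lra.
  rewrite pow_inv. field. split; lra. }
rewrite E.
assert (H2 : 1 - INR d * B <= INR n / INR d ^ M).
{ apply (Rmult_le_reg_r (INR d ^ M)); auto.
  replace (INR n / INR d ^ M * INR d ^ M) with (INR n) by (field; lra). lra. }
assert (INR d * B <= 2 * INR (M + 1) ^ K * B) by (apply Rmult_le_compat_r; lra).
lra.
Qed.

Lemma alpha_sq (n : nat) : 0 < INR n -> / sqrt (INR n) * / sqrt (INR n) * INR n = 1.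
Proof.
intros Hn. rewrite <- Rinv_mult, sqrt_sqrt by lra. field. lra.
Qed.

Lemma INR2 : INR 2 = 2.
Proof. simpl. ring. Qed.

Close Scope R_scope.
From HB Require Import structures.
From Stdlib Require Import Reals.
From mathcomp Require Import all_boot all_order all_algebra all_fingroup.
From mathcomp Require Import Rstruct.
Import Order.TTheory GRing.Theory Num.Theory.
Import Defs.

Definition C2p (z:C) : R * R := (re z, im z).
Definition p2C (p : R*R) := mkC p.1 p.2.
Lemma C2pK : cancel C2p p2C. Proof. by case. Qed.
HB.instance Definition _ := Equality.copy C (can_type C2pK).
HB.instance Definition _ := Choice.copy C (can_type C2pK).

Definition Copp (z : C) := mkC (- re z) (- im z).

Lemma Ceq (z w : C) : re z = re w -> im z = im w -> z = w.
Proof. by case: z; case: w => ? ? ? ? /= -> ->. Qed.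

Lemma CaddA : associative Cadd.
Proof. move=> x y z; apply: Ceq => /=; ring. Qed.
Lemma CaddC : commutative Cadd.
Proof. move=> x y; apply: Ceq => /=; ring. Qed.
Lemma Cadd0 : left_id C0 Cadd.
Proof. move=> x; apply: Ceq => /=; ring. Qed.
Lemma CaddN : left_inverse C0 Copp Cadd.
Proof. move=> x; apply: Ceq => /=; ring. Qed.
HB.instance Definition _ := GRing.isZmodule.Build C CaddA CaddC Cadd0 CaddN.
Lemma CmulA : associative Cmul.
Proof. move=> x y z; apply: Ceq => /=; ring. Qed.
Lemma CmulC : commutative Cmul.
Proof. move=> x y; apply: Ceq => /=; ring. Qed.
Lemma Cmul1 : left_id C1 Cmul.
Proof. move=> x; apply: Ceq => /=; ring. Qed.
Lemma CmulDl : left_distributive Cmul Cadd.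
Proof. move=> x y z; apply: Ceq => /=; ring. Qed.
Lemma C1_neq0 : C1 != C0.
Proof. apply/eqP => /(f_equal re) /=. lra. Qed.
HB.instance Definition _ := GRing.Zmodule_isComNzRing.Build C CmulA CmulC Cmul1 CmulDl C1_neq0.

Lemma CaddE (x y : C) : Cadd x y = (x + y)%R. Proof. by []. Qed.
Lemma CmulE (x y : C) : Cmul x y = (x * y)%R. Proof. by []. Qed.
Lemma C0E : C0 = 0%R. Proof. by []. Qed.
Lemma C1E : C1 = 1%R. Proof. by []. Qed.

Lemma csum_bigE (T : finType) (f : T -> C) : csum f = (\sum_(x : T) f x)%R.
Proof.
rewrite /csum -big_enum /=. 
elim: (enum T) => [|a s IH] /=; first by rewrite big_nil.
by rewrite big_cons IH.
Qed.
Lemma cprod_bigE (T : finType) (f : T -> C) : cprod f = (\prod_(x : T) f x)%R.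
Proof.
rewrite /cprod -big_enum /=.
elim: (enum T) => [|a s IH] /=; first by rewrite big_nil.
by rewrite big_cons IH.
Qed.

Set Implicit Arguments. Unset Strict Implicit. Unset Printing Implicit Defensive.
Local Open Scope ring_scope.

Lemma reD (x y : C) : re (x + y) = (re x + re y)%R. Proof. by []. Qed.
Lemma imD (x y : C) : im (x + y) = (im x + im y)%R. Proof. by []. Qed.
Lemma conjD (x y : C) : Cconj (x + y) = Cconj x + Cconj y.
Proof. apply: Ceq => /=; rewrite /GRing.add /=; ring. Qed.
Lemma conjM (x y : C) : Cconj (x * y) = Cconj x * Cconj y.
Proof. apply: Ceq => /=; rewrite /GRing.mul /=; ring. Qed.
Lemma conj0 : Cconj 0 = 0. Proof. apply: Ceq => /=; ring. Qed.
Lemma conj1 : Cconj 1 = 1. Proof. apply: Ceq => /=; ring. Qed.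

Lemma conj_sum (I : finType) (P : pred I) (F : I -> C) :
  Cconj (\sum_(i | P i) F i) = \sum_(i | P i) Cconj (F i).
Proof. exact: (big_morph Cconj conjD conj0). Qed.
Lemma conj_prod (I : finType) (F : I -> C) :
  Cconj (\prod_i F i) = \prod_i Cconj (F i).
Proof. exact: (big_morph Cconj conjM conj1). Qed.
Lemma re_sum (I : finType) (P : pred I) (F : I -> C) :
  re (\sum_(i | P i) F i) = \sum_(i | P i) re (F i).
Proof. exact: (big_morph re reD (erefl _)). Qed.
Lemma im_sum (I : finType) (P : pred I) (F : I -> C) :
  im (\sum_(i | P i) F i) = \sum_(i | P i) im (F i).
Proof. exact: (big_morph im imD (erefl _)). Qed.

Lemma brakE (T : finType) (v : Vec T) (A : Mat T) :
  braket v A = \sum_i \sum_j Cconj (v i) * (A i j * v j).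
Proof. rewrite /braket csum_bigE; apply: eq_bigr => i _; by rewrite csum_bigE. Qed.

Lemma sum_part (I J : finType) (h : I -> J) (F : I -> J -> C) :
  \sum_i F i (h i) = \sum_a \sum_(i | h i == a) F i a.
Proof.
rewrite (partition_big h predT) //=; apply: eq_bigr => a _.
by apply: eq_bigr => i /eqP ->.
Qed.

Lemma braket_pull (I J : finType) (h : I -> J) (v : Vec I) (X : Mat J) :
  braket v (fun i j => X (h i) (h j)) =
  braket (fun a => \sum_(i | h i == a) v i) X.
Proof.
rewrite !brakE.
under eq_bigr => i _ do rewrite (sum_part h (fun j b => Cconj (v i) * (X (h i) b * v j))).
rewrite (sum_part h (fun i a => \sum_b \sum_(j | h j == b) Cconj (v i) * (X a b * v j))).
apply: eq_bigr => a _.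
rewrite exchange_big /=; apply: eq_bigr => b _.
rewrite conj_sum mulr_suml; apply: eq_bigr => i _.
by rewrite !mulr_sumr.
Qed.

Lemma PSD_pull (I J : finType) (h : I -> J) (X : Mat J) :
  PSD X -> PSD (fun i j => X (h i) (h j)).
Proof. by move=> HX v; rewrite braket_pull; apply: HX. Qed.

Lemma braket_sum (I P : finType) (v : Vec I) (Y : P -> Mat I) :
  braket v (fun i j => \sum_p Y p i j) = \sum_p braket v (Y p).
Proof.
rewrite brakE; under eq_bigr => i _ do under eq_bigr => j _ do
  rewrite mulr_suml mulr_sumr.
under eq_bigr => i _ do rewrite exchange_big.
rewrite exchange_big; apply: eq_bigr => p _; by rewrite brakE.
Qed.

Lemma PSD_sum (I P : finType) (Y : P -> Mat I) :
  (forall p, PSD (Y p)) -> PSD (fun i j => \sum_p Y p i j).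
Proof.
move=> HY v; rewrite braket_sum im_sum re_sum; split.
  by rewrite big1 // => p _; case: (HY p v).
apply/RleP; apply: sumr_ge0 => p _; apply/RleP; by case: (HY p v).
Qed.

Lemma normC_im (z : C) : im (z * Cconj z) = 0%R.
Proof. rewrite /GRing.mul /GRing.zero /=; ring. Qed.
Lemma normC_re (z : C) : re (z * Cconj z) = Rplus (Rmult (re z) (re z)) (Rmult (im z) (im z)).
Proof. rewrite /GRing.mul /=; ring. Qed.


Lemma braket_outer (I : finType) (v psi : Vec I) :
  braket v (fun i j => psi i * Cconj (psi j)) =
  (\sum_i Cconj (v i) * psi i) * Cconj (\sum_i Cconj (v i) * psi i).
Proof.
rewrite brakE conj_sum mulr_suml; apply: eq_bigr => i _.
rewrite mulr_sumr; apply: eq_bigr => j _.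
rewrite conjM.
have -> : Cconj (Cconj (v j)) = v j by apply: Ceq => //=; ring.
by rewrite -!mulrA [Cconj (psi j) * v j]mulrC.
Qed.
Lemma PSD_outer (I : finType) (psi : Vec I) :
  PSD (fun i j => psi i * Cconj (psi j)).
Proof.
move=> v; rewrite braket_outer normC_im normC_re; split => //.
apply: Rplus_le_le_0_compat; apply: Rle_0_sqr.
Qed.



Definition pchan (P Q S : finType) (pi : P * Q -> S) (X : Mat S) : Mat Q :=
  fun q q' => \sum_p X (pi (p, q)) (pi (p, q')).

Lemma pchan_channel (P Q S : finType) (pi : P * Q -> S) :
  bijective pi -> is_channel (pchan pi).
Proof.
move=> bij; split.
- move=> a X Y i j; rewrite /pchan !CaddE !CmulE big_split /=.
  by rewrite mulr_sumr.
- move=> X; rewrite /Mtrace !csum_bigE /pchan.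
  rewrite exchange_big pair_big /=.
  rewrite (reindex pi) /=; last by apply: onW_bij.
  by apply: eq_bigr => -[p q].
- move=> k X HX.
  exact: (@PSD_sum _ _ (fun p (i j : 'I_k * Q) => X (i.1, pi (p, i.2)) (j.1, pi (p, j.2)))
            (fun p => @PSD_pull _ _ (fun i : 'I_k * Q => (i.1, pi (p, i.2))) _ HX)).
Qed.


Lemma cnt_sum (M d : nat) (y : {ffun 'I_M -> 'I_d}) (k : 'I_d) :
  count_mem k (codom y) = (\sum_(i < M) (y i == k))%N.
Proof.
rewrite codomE count_map -sum1_count big_mkcond /=.
rewrite big_enum_cond /=.
by apply: eq_bigr => i _; case: (_ == _).
Qed.

Lemma exp_sum (I : finType) (F : I -> R) : exp (\sum_i F i) = \prod_i exp (F i).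
Proof. exact: (big_morph exp exp_plus exp_0). Qed.
Lemma INR_sum (I : finType) (F : I -> nat) : INR (\sum_i F i)%N = \sum_i INR (F i).
Proof. exact: (big_morph INR plus_INR (erefl _)). Qed.

Lemma sum_ffun_prod (M d : nat) (F : 'I_d -> R) :
  \sum_(y : {ffun 'I_M -> 'I_d}) \prod_(i < M) F (y i) = (\sum_a F a) ^+ M.
Proof.
rewrite -(bigA_distr_bigA (fun (i : 'I_M) (a : 'I_d) => F a)) /=.
by rewrite prodr_const card_ord.
Qed.

Lemma sumF (d : nat) (k : 'I_d) (l : R) :
  \sum_(a : 'I_d) exp (- l * INR (a == k)) = exp (- l) + INR d - 1.
Proof.
rewrite (bigD1 k) //= eqxx /=.
rewrite (eq_bigr (fun _ => 1)); last first.
  by move=> a /negbTE ->; rewrite /= Rmult_0_r exp_0.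
rewrite sumr_const cardC1 card_ord Rmult_1_r.
rewrite INRE.
case: d k => [|d] k; first by case: k.
by rewrite /= -addn1 natrD addrA addrK.
Qed.

Lemma tail_sum (d M c : nat) (k : 'I_d) (l : R) : 0 <= l ->
  INR #|[pred y : {ffun 'I_M -> 'I_d} | (count_mem k (codom y) < c)%N]| <=
  exp (l * INR c) * (exp (- l) + INR d - 1) ^+ M.
Proof.
move=> l0.
rewrite -(sumF k). rewrite -(@sum_ffun_prod M d) mulr_sumr.
rewrite INRE -sum1_card natr_sum big_mkcond /=.
apply: ler_sum => y _.
have -> : \prod_(i < M) exp (- l * INR (y i == k)) = exp (- l * INR (count_mem k (codom y))).
  rewrite cnt_sum INR_sum -exp_sum; congr exp.
  by rewrite !RealsE mulr_sumr.
rewrite (_ : exp _ * exp _ = exp (l * INR c + - l * INR (count_mem k (codom y)))); last by rewrite exp_plus.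
have Hpos : 0 < exp (l * INR c + - l * INR (count_mem k (codom y))).
  by apply/RltP; apply: exp_pos.
case: ifP => Hb; last exact: ltW.
rewrite inE /= in Hb.
apply/RleP; apply: exp_ge1_aux; first exact/RleP.
by move/ssrnat.leP: Hb => /le_INR; rewrite S_INR.
Qed.

Local Close Scope ring_scope.

Definition blocks (d : nat) (n : 'I_d -> nat) : seq 'I_d :=
  flatten [seq nseq (n j) j | j <- enum 'I_d].

Lemma count_blocks d (n : 'I_d -> nat) k : count_mem k (blocks n) = n k.
Proof.
rewrite /blocks count_flatten sumnE !big_map.
rewrite (bigD1 k) //= count_nseq /= eqxx mul1n big1 ?addn0 // => j /negbTE.
by rewrite count_nseq /= eq_sym => ->.
Qed.

Lemma size_blocks d (n : 'I_d -> nat) : size (blocks n) = \sum_j n j.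
Proof.
by rewrite /blocks size_flatten /shape -map_comp sumnE big_map big_enum /=;
  apply: eq_bigr => j _; rewrite /= size_nseq.
Qed.

Lemma sum_count (d : nat) (s : seq 'I_d) : \sum_(k : 'I_d) count_mem k s = size s.
Proof.
elim: s => [|x s IH] /=; first by rewrite big1.
rewrite big_split /= IH (bigD1 x) //= eqxx big1 // => j /negbTE.
by rewrite eq_sym => ->.
Qed.

Definition Dseq (d c : nat) : seq 'I_d := blocks (fun _ => c).

Definition goodb (d N M c : nat) (y : {ffun 'I_M -> 'I_d}) : bool :=
  [exists t : N.-tuple 'I_d, perm_eq (codom y) (t ++ Dseq d c)].

Lemma good_of_counts (d N M c : nat) (y : {ffun 'I_M -> 'I_d}) :
  (c * d + N = M)%N -> (forall k, c <= count_mem k (codom y))%N -> goodb N c y.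
Proof.
move=> HM Hk.
set s := blocks (fun j => count_mem j (codom y) - c).
have Hs : size s == N.
  rewrite /s size_blocks.
  have : (\sum_j (count_mem j (codom y) - c) + \sum_(j : 'I_d) c = M)%N.
    rewrite -big_split /=.
    rewrite (eq_bigr (fun j => count_mem j (codom y))); last by move=> j _; rewrite subnK.
    by rewrite sum_count size_codom card_ord.
  rewrite sum_nat_const card_ord => H.
  by rewrite -(eqn_add2r (d * c)) H -HM mulnC addnC.
apply/existsP; exists (Tuple Hs).
rewrite /perm_eq; apply/allP => x _ /=.
by rewrite count_cat /Dseq !count_blocks subnK.
Qed.

Lemma card_sumb (T : finType) (P : pred T) : #|[pred x | P x]| = \sum_x (P x : nat).
Proof. rewrite -sum1_card big_mkcond /=; apply: eq_bigr => x _; by rewrite inE; case: (P x). Qed.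

Lemma notgood_card (d N M c : nat) : (c * d + N = M)%N ->
  #|[pred y : {ffun 'I_M -> 'I_d} | ~~ goodb N c y]| <=
  \sum_(k : 'I_d) #|[pred y : {ffun 'I_M -> 'I_d} | count_mem k (codom y) < c]|.
Proof.
move=> HM.
rewrite card_sumb (eq_bigr (fun k : 'I_d => \sum_(y : {ffun 'I_M -> 'I_d}) (count_mem k (codom y) < c : nat))); last first.
  by move=> k _; rewrite card_sumb.
rewrite exchange_big /=; apply: leq_sum => y _.
case: (boolP (goodb N c y)) => //= Hg.
have [k Hk] : exists k, count_mem k (codom y) < c.
  apply/existsP; apply: contraR Hg => /existsPn Hn.
  apply: good_of_counts HM _ => k; by rewrite leqNgt Hn.
by rewrite (bigD1 k) //= Hk.
Qed.

Lemma good_exists (d N M c : nat) (k0 : 'I_d) : (c * d + N = M)%N ->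
  exists y : {ffun 'I_M -> 'I_d}, goodb N c y.
Proof.
move=> HM.
set s := nseq N k0 ++ Dseq d c.
have Hs : size s = M.
  by rewrite size_cat size_nseq /Dseq size_blocks sum_nat_const card_ord -HM addnC mulnC.
exists [ffun i : 'I_M => nth k0 s i].
apply/existsP; exists (nseq_tuple N k0) => /=.
have -> : codom [ffun i : 'I_M => nth k0 s i] = s.
  rewrite codomE -{2}(mkseq_nth k0 s) Hs /mkseq -val_enum_ord -map_comp.
  by apply: eq_map => i; rewrite /= ffunE.
by [].
Qed.

Lemma d_bound (d M : nat) : 1 < d -> 0 < M -> d <= 2 * (M + 1) ^ ((d * (d - 1)) %/ 2).
Proof.
move=> Hd HM.
set K := (d * (d - 1)) %/ 2.
have h1 : d <= 2 ^ d by apply: ltnW; apply: ltn_expl.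
have h2 : 2 ^ d = 2 * 2 ^ (d - 1) by rewrite -expnS subn1 prednK // ltnW.
have h3 : d - 1 <= K.
  rewrite /K leq_divRL // mulnC leq_mul2r; by rewrite Hd orbT.
have hK : 0 < K by apply: leq_trans h3; rewrite subn_gt0.
have h4 : 2 ^ (d - 1) <= 2 ^ K by apply: leq_pexp2l.
have h5 : 2 ^ K <= (M + 1) ^ K.
  by rewrite leq_exp2r // addn1 ltnS.
apply: (leq_trans h1); rewrite h2 leq_mul2l /=.
exact: leq_trans h4 h5.
Qed.

Local Open Scope R_scope.

Lemma bad_real (d N M c : nat) (k : 'I_d) : (1 <= d)%N -> (0 < M)%N -> (c * d + N = M)%N ->
  INR #|[pred y : {ffun 'I_M -> 'I_d} | (count_mem k (codom y) < c)%N]|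
  <= INR d ^ M * exp (- (2 * INR N ^ 2) / (INR d ^ 2 * INR M)).
Proof.
move=> Hd HM Hc.
have Hd' : 1 <= INR d by apply: (le_INR 1); apply/ssrnat.leP.
have HM' : 0 < INR M by apply: lt_0_INR; apply/ssrnat.ltP.
have Hl : 0 <= 4 * INR N / (INR d * INR M).
  apply: Rmult_le_pos; first by have := pos_INR N; lra.
  by left; apply: Rinv_0_lt_compat; apply: Rmult_lt_0_compat; lra.
apply: Rle_trans (tail_real (INR d) (INR M) (INR N) (INR c) M Hd' HM' (erefl _) _ (pos_INR N)); last first.
  by rewrite -Hc plus_INR mult_INR.
have := @tail_sum d M c k (4 * INR N / (INR d * INR M)).
move/(_ (introT RleP Hl))/RleP. by rewrite RpowE.
Qed.

Lemma good_real (d N M c : nat) : (1 <= d)%N -> (0 < M)%N -> (c * d + N = M)%N ->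
  INR d ^ M * (1 - INR d * exp (- (2 * INR N ^ 2) / (INR d ^ 2 * INR M)))
  <= INR #|[pred y : {ffun 'I_M -> 'I_d} | goodb N c y]|.
Proof.
move=> Hd HM Hc.
set B := exp _.
have Hcard : (#|[pred y : {ffun 'I_M -> 'I_d} | goodb N c y]| +
              #|[pred y : {ffun 'I_M -> 'I_d} | ~~ goodb N c y]| = d ^ M)%N.
  rewrite !card_sumb -big_split /=.
  rewrite (eq_bigr (fun _ => 1%N)); last by move=> y _; case: (goodb N c y).
  by rewrite sum1_card card_ffun !card_ord.
have Hng : INR #|[pred y : {ffun 'I_M -> 'I_d} | ~~ goodb N c y]| <= INR d * (INR d ^ M * B).
  apply: Rle_trans; first by apply: le_INR; apply/ssrnat.leP; apply: (notgood_card Hc).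
  rewrite INR_sum.
  apply: (@Rle_trans _ (\sum_(k : 'I_d) (pow (INR d) M * B))%R).
    apply/RleP; apply: ler_sum => k _.
    by apply/RleP; apply: bad_real.
  by apply/RleP; rewrite sumr_const card_ord -mulr_natl INRE.
have : INR (d ^ M) = INR #|[pred y : {ffun 'I_M -> 'I_d} | goodb N c y]| +
                     INR #|[pred y : {ffun 'I_M -> 'I_d} | ~~ goodb N c y]|.
  by rewrite -Hcard !INRE natrD.
have -> : INR (d ^ M) = INR d ^ M by rewrite RpowE !INRE natrX.
move=> E.
lra.
Qed.

Local Close Scope R_scope.
Local Open Scope ring_scope.

Lemma braket_ext (T : finType) (v : Vec T) (A B : Mat T) :
  (forall i j, A i j = B i j) -> braket v A = braket v B.
Proof.
move=> H; rewrite !brakE; apply: eq_bigr => i _; apply: eq_bigr => j _; by rewrite H.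
Qed.

Lemma Mtpow_diag (T : finType) (N : nat) (U : Mat T) (ph : T -> C) :
  (forall i j, U i j = if i == j then ph i else 0) ->
  forall x y, Mtpow N U x y = if x == y then \prod_k ph (x k) else 0.
Proof.
move=> HU x y; rewrite /Mtpow cprod_bigE.
case: eqP => [<-|/eqP Hxy].
  by apply: eq_bigr => k _; rewrite HU eqxx.
have [k Hk] : exists k, x k != y k.
  apply/existsP; apply: contraR Hxy => /existsPn H.
  by apply/eqP/ffunP => k; apply/eqP; move: (H k); rewrite negbK.
by rewrite (bigD1 k) //= HU (negbTE Hk) mul0r.
Qed.

Lemma W_diag (T1 T2 T3 : finType) (A : Mat T1) (a : T1 -> C) :
  (forall i j, A i j = if i == j then a i else 0) ->
  forall s s' : (T1 * T2) * T3,
  kron (kron A (Mid T2)) (Mid T3) s s' = if s == s' then a s.1.1 else 0.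
Proof.
move=> HA [[x1 x2] x3] [[y1 y2] y3]; rewrite /kron /Mid /= HA !CmulE !C1E !C0E.
rewrite !xpair_eqE.
by case: (x1 == y1); case: (x2 == y2); case: (x3 == y3); rewrite /= ?mulr1 ?mulr0 ?mul0r.
Qed.

Lemma sum_delta (T : finType) (i : T) (F : T -> C) :
  \sum_k (if i == k then F k else 0) = F i.
Proof.
rewrite (bigD1 i) //= eqxx big1 ?addr0 // => k /negbTE.
by rewrite eq_sym => ->.
Qed.

Lemma diag_conj (T : finType) (W : Mat T) (w : T -> C) (psi : Vec T) :
  (forall i j, W i j = if i == j then w i else 0) ->
  forall i j, Mmul (Mmul W (fun i j => psi i * Cconj (psi j))) (Madj W) i j
              = (w i * psi i) * Cconj (w j * psi j).
Proof.
move=> HW i j; rewrite /Mmul /Madj csum_bigE.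
have E1 : forall k, csum (fun l => Cmul (W i l) (psi l * Cconj (psi k))) = w i * (psi i * Cconj (psi k)).
  move=> k; rewrite csum_bigE -(sum_delta i (fun l => w i * (psi l * Cconj (psi k)))).
  apply: eq_bigr => l _; rewrite HW CmulE; case: eqP => [->|_]; by rewrite ?mul0r.
under eq_bigr => k _ do rewrite E1 HW CmulE.
rewrite (eq_bigr (fun k => if j == k then w i * (psi i * Cconj (psi k)) * Cconj (w j) else 0)); last first.
  by move=> k _; case: eqP => _; rewrite ?conj0 ?mulr0.
rewrite sum_delta conjM -!mulrA [Cconj (w j) * _]mulrC. done.
Qed.

Lemma pchan_collapse (P Q S : finType) (pi : P * Q -> S) (X : Mat S) (phi : Vec S)
  (chi : Vec Q) (x0 : P) :
  (forall s s', X s s' = phi s * Cconj (phi s')) ->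
  (forall x y, phi (pi (x, y)) = if x == x0 then chi y else 0) ->
  forall y y', pchan pi X y y' = chi y * Cconj (chi y').
Proof.
move=> HX Hphi y y'; rewrite /pchan.
rewrite (eq_bigr (fun x => if x0 == x then chi y * Cconj (chi y') else 0)).
  by rewrite sum_delta.
move=> x _; rewrite HX !Hphi eq_sym; case: eqP => _ //; by rewrite mul0r.
Qed.

Lemma sum_pi (P Q S : finType) (pi : P * Q -> S) (F : S -> C) :
  bijective pi -> \sum_s F s = \sum_y \sum_x F (pi (x, y)).
Proof.
move=> bij; rewrite (reindex pi) /=; last by apply: onW_bij.
rewrite exchange_big pair_big /=; by apply: eq_bigr => -[p q].
Qed.


Definition fsel (d N M c : nat) (x0 : {ffun 'I_N -> 'I_d}) (y : {ffun 'I_M -> 'I_d}) :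
  {ffun 'I_N -> 'I_d} :=
  if [pick t : N.-tuple 'I_d | perm_eq (codom y) (t ++ Dseq d c)] is Some t
  then [ffun i => tnth t i] else x0.

Definition phv (theta : nat -> R) (d n : nat) (x : {ffun 'I_n -> 'I_d}) : C :=
  \prod_k phase theta (x k).

Lemma phase_unit (theta : nat -> R) (a : nat) : Cconj (phase theta a) * phase theta a = 1.
Proof.
rewrite /phase; case: (a == 0)%N; apply: Ceq; rewrite /GRing.mul /GRing.one /= ?Rmult_1_l ?Rmult_0_l;
  try ring.
have := sin2_cos2 (- theta a); rewrite /Rsqr => H; lra.
Qed.

Lemma phv_unit (theta : nat -> R) (d n : nat) (x : {ffun 'I_n -> 'I_d}) :
  Cconj (phv theta x) * phv theta x = 1.
Proof.
rewrite /phv conj_prod -big_split /=; apply: big1 => k _; exact: phase_unit.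
Qed.

Lemma prod_codom (theta : nat -> R) (d n : nat) (x : {ffun 'I_n -> 'I_d}) :
  phv theta x = \prod_(a <- codom x) phase theta a.
Proof.
by rewrite /phv codomE big_map big_enum /=; apply: eq_bigl.
Qed.

Lemma fsel_spec (theta : nat -> R) (d N M c : nat) (x0 : {ffun 'I_N -> 'I_d})
  (y : {ffun 'I_M -> 'I_d}) : goodb N c y ->
  phv theta y = phv theta (fsel c x0 y) * \prod_(a <- Dseq d c) phase theta a.
Proof.
move=> /existsP [t0 Ht0].
rewrite /fsel; case: pickP => [t Ht|Hn]; last by move: (Hn t0); rewrite Ht0.
rewrite !prod_codom (perm_big _ Ht) big_cat /=; congr (_ * _).
rewrite -prod_codom /phv big_tuple.
by apply: eq_bigr => i _; rewrite ffunE.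
Qed.


Lemma RtoC_mul (a b : R) : RtoC a * RtoC b = RtoC (Rmult a b).
Proof. apply: Ceq; rewrite /GRing.mul /=; ring. Qed.
Lemma RtoC_exp (a : R) (n : nat) : RtoC a ^+ n = RtoC (pow a n).
Proof.
elim: n => [|n IH]; first by rewrite expr0.
by rewrite exprS IH RtoC_mul.
Qed.
Lemma conj_RtoC (a : R) : Cconj (RtoC a) = RtoC a.
Proof. apply: Ceq => //=; ring. Qed.
Lemma conjK (z : C) : Cconj (Cconj z) = z.
Proof. apply: Ceq => //=; ring. Qed.
Lemma conj_mulrn (z : C) (n : nat) : Cconj (z *+ n) = Cconj z *+ n.
Proof. elim: n => [|n IH]; first by rewrite !mulr0n conj0. by rewrite !mulrS conjD IH. Qed.
Lemma re_mulrn (z : C) (n : nat) : re (z *+ n) = Rmult (re z) (INR n).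
Proof.
elim: n => [|n IH]; first by rewrite mulr0n /=; ring.
rewrite mulrS reD IH S_INR -RplusE; ring.
Qed.
Lemma im_mulrn (z : C) (n : nat) : im (z *+ n) = Rmult (im z) (INR n).
Proof.
elim: n => [|n IH]; first by rewrite mulr0n /=; ring.
rewrite mulrS imD IH S_INR -RplusE; ring.
Qed.
Lemma conj_seqprod (I : Type) (s : seq I) (F : I -> C) :
  Cconj (\prod_(a <- s) F a) = \prod_(a <- s) Cconj (F a).
Proof. exact: (big_morph Cconj conjM conj1). Qed.


From mathcomp Require Import ring.


Lemma sum_good (T : finType) (P : pred T) (K : C) :
  \sum_y (if P y then K else 0) = K *+ #|[pred y | P y]|.
Proof. by rewrite -big_mkcond sumr_const. Qed.

Lemma Omega_unit (theta : nat -> R) (d : nat) (s : seq 'I_d) :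
  Cconj (\prod_(a <- s) phase theta a) * \prod_(a <- s) phase theta a = 1.
Proof.
rewrite conj_seqprod -big_split /=; apply: big1_seq => a _; exact: phase_unit.
Qed.

Local Close Scope ring_scope.
Local Open Scope R_scope.

Theorem mainTheorem7 (d N M : nat)
  (hd : (2 <= d)%N) (hN : (1 <= N)%N) (hNM : (N <= M)%N) (hdiv : (d %| M - N)%N) :
  exists (A : finType)
         (sigma : Mat (({ffun 'I_N -> 'I_d} * A) * {ffun 'I_M -> 'I_d})%type)
         (Chan : Mat (({ffun 'I_N -> 'I_d} * A) * {ffun 'I_M -> 'I_d})%type ->
                 Mat {ffun 'I_M -> 'I_d}),
    is_state sigma /\ is_channel Chan /\
    forall theta : nat -> R,
      (forall k : nat, (1 <= k)%N -> (k <= d - 1)%N -> 0 <= theta k < 2 * PI) ->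
      let W := kron (kron (Mtpow N (Utheta d theta)) (Mid A)) (Mid {ffun 'I_M -> 'I_d}) in
      let z := braket (Vtpow M (etheta d theta))
                      (Chan (Mmul (Mmul W sigma) (Madj W))) in
      im z = 0 /\
      re z >= 1 - 2 * INR (M + 1) ^ ((d * (d - 1)) %/ 2)%N
                    * exp (- (2 * INR N ^ 2) / (INR d ^ 2 * INR M)).
Proof.
have d0 : (0 < d)%N by apply: leq_trans hd.
have HM0 : (0 < M)%N by apply: leq_trans hNM.
set c := ((M - N) %/ d)%N.
have Hc : (c * d + N = M)%N by rewrite /c divnK // subnK.
pose k0 : 'I_d := Ordinal d0.
pose x0 : {ffun 'I_N -> 'I_d} := [ffun => k0].
pose fs := fun y : {ffun 'I_M -> 'I_d} => fsel c x0 y.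
pose g := fun y => tperm x0 (fs y).
pose pi := fun p : {ffun 'I_N -> 'I_d} * {ffun 'I_M -> 'I_d} => ((g p.2 p.1, tt), p.2).
have bij : bijective pi.
  exists (fun s : ({ffun 'I_N -> 'I_d} * unit) * {ffun 'I_M -> 'I_d} => (g s.2 s.1.1, s.2)).
  - by move=> [x y]; rewrite /pi /= tpermK.
  - by move=> [[x []] y]; rewrite /pi /= tpermK.
have gE : forall x y, (g y x == fs y) = (x == x0).
  move=> x y; rewrite -{1}(tpermL x0 (fs y)).
  exact: (inj_eq (@perm_inj _ (g y))).
pose n := #|[pred y : {ffun 'I_M -> 'I_d} | goodb N c y]|.
have n0 : (0 < n)%N.
  have [y Hy] := good_exists k0 Hc.
  by apply/card_gt0P; exists y; rewrite inE.
pose alpha := / sqrt (INR n).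
pose psi := fun s : ({ffun 'I_N -> 'I_d} * unit) * {ffun 'I_M -> 'I_d} =>
  if (s.1.1 == fs s.2) && goodb N c s.2 then RtoC alpha else 0%R.
have psiE : forall x y, psi (pi (x, y)) =
    if x == x0 then (if goodb N c y then RtoC alpha else 0%R) else 0%R.
  by move=> x y; rewrite /psi /= gE; case: (x == x0).
exists unit, (fun i j => (psi i * Cconj (psi j))%R), (pchan pi).
split; [split|split].
- exact: PSD_outer.
- rewrite /Mtrace csum_bigE (sum_pi _ bij).
  rewrite (eq_bigr (fun y => if goodb N c y then (RtoC alpha * Cconj (RtoC alpha))%R else 0%R)); last first.
    move=> y _; rewrite (eq_bigr (fun x => if x0 == x then
        (if goodb N c y then (RtoC alpha * Cconj (RtoC alpha))%R else 0%R) else 0%R)).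
      by rewrite sum_delta.
    move=> x _; rewrite psiE eq_sym; case: (x0 == x); case: (goodb N c y); by rewrite ?mul0r.

  rewrite sum_good conj_RtoC RtoC_mul.
  have Hn : 0 < INR n by apply: lt_0_INR; apply/ssrnat.ltP.
  apply: Ceq; first by rewrite re_mulrn /= alpha_sq.
  by rewrite im_mulrn /= Rmult_0_l.
- exact: pchan_channel.
- move=> theta Hth W z.
  have HU : forall i j, Utheta d theta i j = if i == j then phase theta i else 0%R by [].
  have HW := W_diag (T2:=unit) (T3:={ffun 'I_M -> 'I_d}) (Mtpow_diag (N:=N) HU).
  have HX := diag_conj psi HW.
  pose chi := fun y => (phv theta (fs y) * (if goodb N c y then RtoC alpha else 0%R))%R.
  have Hphi : forall x y, ((\prod_k phase theta ((pi (x, y)).1.1 k)) * psi (pi (x, y)))%R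
                          = if x == x0 then chi y else 0%R.
    move=> x y; rewrite psiE; case: eqP => [->|_]; last by rewrite mulr0.
    by rewrite /chi /pi /= /g tpermL.
  have HC := pchan_collapse HX Hphi.
  rewrite /z (braket_ext _ HC) braket_outer.
  pose s := / sqrt (INR d).
  pose Om := (\prod_(a <- Dseq d c) phase theta a)%R.
  pose K := (RtoC (pow s M * alpha) * Cconj Om)%R.
  have Hv : forall y, Vtpow M (etheta d theta) y = (RtoC (pow s M) * phv theta y)%R.
    move=> y; rewrite /Vtpow cprod_bigE /etheta.
    under eq_bigr do rewrite CmulE.
    by rewrite big_split /= prodr_const card_ord RtoC_exp.
  have HS : forall y, (Cconj (Vtpow M (etheta d theta) y) * chi y =
                       if goodb N c y then K else 0)%R.
    move=> y; rewrite /chi; case: ifP => Hg; last by rewrite !mulr0.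
    rewrite Hv (fsel_spec theta x0 Hg) !conjM conj_RtoC.
    change (fs y) with (fsel c x0 y).
    have U := phv_unit theta (fsel c x0 y).
    rewrite /K -RtoC_mul.
    transitivity (RtoC (s ^ M) * RtoC alpha * Cconj Om *
      (Cconj (phv theta (fsel c x0 y)) * phv theta (fsel c x0 y)))%R; first by rewrite /Om; ring.
    by rewrite U mulr1.
  rewrite (eq_bigr _ (fun y _ => HS y)) sum_good.
  rewrite conj_mulrn mulrnAl mulrnAr -mulrnA.
  have HK : (K * Cconj K = RtoC (pow s M * alpha * (pow s M * alpha)))%R.
    rewrite /K !conjM conjK conj_RtoC.
    transitivity (RtoC (pow s M * alpha) * RtoC (pow s M * alpha) * (Cconj Om * Om))%R; first by ring.
    by rewrite /Om Omega_unit mulr1 RtoC_mul.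
  rewrite HK re_mulrn im_mulrn /=.
  split; first by rewrite Rmult_0_l.
  have Hd1 : 1 <= INR d by apply: (le_INR 1); apply/ssrnat.leP; apply: ltnW.
  have Hn : 0 < INR n by apply: lt_0_INR; apply/ssrnat.ltP.
  have HB : 0 <= exp (- (2 * INR N ^ 2) / (INR d ^ 2 * INR M)) by left; apply: exp_pos.
  have HdK : INR d <= 2 * INR (M + 1) ^ ((d * (d - 1)) %/ 2)%N.
    have := d_bound hd HM0 => /ssrnat.leP /le_INR.
    by rewrite !INRE natrM natrX -!INRE -RpowE INR2.
  apply: (final_real d M n _ _ Hd1 Hn HB HdK).
  exact: (good_real (ltnW hd) HM0 Hc).
Qed.
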